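(* Let $\rho_{ABC},\tau_{AC},\theta_{BC},\omega_C$ be positive definite density operators on the indicated spaces and let $\mathcal{N}=\mathcal{N}_{A\to A'}$, $\mathcal{M}=\mathcal{M}_{B\to B'}$ be quantum channels. Then $$\begin{aligned} \Delta_{\max}(\rho_{ABC};\tau_{AC},\omega_C,\theta_{BC})&\ge\Delta_{\max}(\mathcal{M}(\rho_{ABC});\tau_{AC},\omega_C,\mathcal{M}(\theta_{BC})),\\ \Delta_{\max}(\rho_{ABC};\omega_C,\tau_{AC},\theta_{BC})&\ge\Delta_{\max}(\mathcal{M}(\rho_{ABC});\omega_C,\tau_{AC},\mathcal{M}(\theta_{BC})),\\ \Delta_{\max}(\rho_{ABC};\omega_C,\theta_{BC},\tau_{AC})&\ge\Delta_{\max}(\mathcal{N}(\rho_{ABC});\omega_C,\theta_{BC},\mathcal{N}(\tau_{AC})),\\ \Delta_{\max}(\rho_{ABC};\theta_{BC},\omega_C,\tau_{AC})&\ge\Delta_{\max}(\mathcal{N}(\rho_{ABC});\theta_{BC},\omega_C,\mathcal{N}(\tau_{AC})). \end{aligned}$$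
   Context: Finite-dimensional Hilbert spaces; natural log; operators on subsystems tensored with identities; negative powers taken on the support (generalized inverse). Set $e(\tau)=e(\theta)=+1$, $e(\omega)=-1$; for an ordered triple $(X,Y,Z)$ (a permutation of operators of the types $\tau_{AC},\omega_C,\theta_{BC}$) let $K_{-1}(X,Y,Z)=X^{-e_X/2}Y^{-e_Y/2}Z^{-e_Z}Y^{-e_Y/2}X^{-e_X/2}$ and $\Delta_{\max}(\rho;X,Y,Z)\equiv\log\|\rho^{1/2}K_{-1}(X,Y,Z)\rho^{1/2}\|_\infty$; equivalently, when $K_{-1}$ is invertible, $\Delta_{\max}(\rho;X,Y,Z)=\inf\{\lambda:\rho\le e^{\lambda}K_{-1}(X,Y,Z)^{-1}\}$. E.g. $\Delta_{\max}(\rho;\tau,\omega,\theta)=\log\|\rho^{1/2}\tau^{-1/2}\omega^{1/2}\theta^{-1}\omega^{1/2}\tau^{-1/2}\rho^{1/2}\|_\infty=\inf\{\lambda:\rho\le e^\lambda\tau^{1/2}\omega^{-1/2}\theta\omega^{-1/2}\tau^{1/2}\}$. *)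

(* Defs.v *)
(* Operators on a finite-dimensional Hilbert space with
   orthonormal basis indexed by a finType I are functions I -> I -> F, where
   F is an arbitrary numClosedFieldType (e.g. the complex numbers). *)
From Stdlib Require Import ClassicalEpsilon.
From HB Require Import structures.
From mathcomp Require Import all_boot all_order all_algebra.
Set Implicit Arguments. Unset Strict Implicit. Unset Printing Implicit Defensive.
Import Order.TTheory GRing.Theory Num.Theory.
Local Open Scope ring_scope.

Section QOps.
Variable F : numClosedFieldType.

Definition op (I : finType) := I -> I -> F.
Definition vec (I : finType) := I -> F.

Definition opmul {I : finType} (X Y : op I) : op I :=
  fun i j => \sum_k X i k * Y k j.
Definition opadj {I : finType} (X : op I) : op I := fun i j => (X j i)^*.
Definition op1 {I : finType} : op I := fun i j => (i == j)%:R.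
Definition opdiag {I : finType} (d : vec I) : op I :=
  fun i j => (i == j)%:R * d i.
Definition optr {I : finType} (X : op I) : F := \sum_i X i i.
Definition opapp {I : finType} (X : op I) (v : vec I) : vec I :=
  fun i => \sum_j X i j * v j.
Definition qform {I : finType} (X : op I) (v : vec I) : F :=
  \sum_i \sum_j (v i)^* * X i j * v j.

Definition hermitian {I : finType} (X : op I) : Prop := opadj X = X.
Definition psd {I : finType} (X : op I) : Prop :=
  hermitian X /\ forall v : vec I, 0 <= qform X v.
Definition pd {I : finType} (X : op I) : Prop :=
  hermitian X /\ forall v : vec I, v <> (fun _ => 0) -> 0 < qform X v.
Definition pd_density {I : finType} (X : op I) : Prop := pd X /\ optr X = 1.

Definition unitary {I : finType} (U : op I) : Prop :=
  opmul U (opadj U) = op1 /\ opmul (opadj U) U = op1.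

Definition spec_decomp {I : finType} (X : op I) (ud : (op I * vec I)%type) : Prop :=
  unitary ud.1 /\ (forall i, 0 <= ud.2 i) /\
  X = opmul (opmul ud.1 (opdiag ud.2)) (opadj ud.1).

(* x^(k/2) for x >= 0, with 0^(k/2) := 0 (powers taken on the support) *)
Definition hpow (k : int) (x : F) : F := if x == 0 then 0 else sqrtC x ^ k.

(* X^(k/2) for X positive semidefinite, negative powers on the support
   (generalized inverse), via functional calculus *)
Definition oppow {I : finType} (k : int) (X : op I) : op I :=
  let ud := epsilon (inhabits (op1, fun _ => 0)) (spec_decomp X) in
  opmul (opmul ud.1 (opdiag (fun i => hpow k (ud.2 i)))) (opadj ud.1).

Definition ampl {R A A' : finType} (N : op A -> op A') (X : op (R * A)%type)
  : op (R * A')%type := fun i j => N (fun a a' => X (i.1, a) (j.1, a')) i.2 j.2.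
Definition linear_map {A A' : finType} (N : op A -> op A') : Prop :=
  forall (c : F) (X Y : op A),
    N (fun i j => c * X i j + Y i j) = (fun i j => c * N X i j + N Y i j).
Definition completely_positive {A A' : finType} (N : op A -> op A') : Prop :=
  forall (n : nat) (X : op ('I_n * A)%type), psd X -> psd (ampl N X).
Definition trace_preserving {A A' : finType} (N : op A -> op A') : Prop :=
  forall X : op A, optr (N X) = optr X.
Definition channel {A A' : finType} (N : op A -> op A') : Prop :=
  [/\ linear_map N, completely_positive N & trace_preserving N].

Definition chanA {A A' B C : finType} (N : op A -> op A') (X : op (A * B * C)%type)
  : op (A' * B * C)%type :=
  fun i j => N (fun a a' => X (a, i.1.2, i.2) (a', j.1.2, j.2)) i.1.1 j.1.1.
Definition chanB {A B B' C : finType} (M : op B -> op B') (X : op (A * B * C)%type)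
  : op (A * B' * C)%type :=
  fun i j => M (fun b b' => X (i.1.1, b, i.2) (j.1.1, b', j.2)) i.1.2 j.1.2.
Definition chan1 {A A' C : finType} (N : op A -> op A') (X : op (A * C)%type)
  : op (A' * C)%type :=
  fun i j => N (fun a a' => X (a, i.2) (a', j.2)) i.1 j.1.

Definition embAC {A B C : finType} (X : op (A * C)%type) : op (A * B * C)%type :=
  fun i j => X (i.1.1, i.2) (j.1.1, j.2) * (i.1.2 == j.1.2)%:R.
Definition embBC {A B C : finType} (X : op (B * C)%type) : op (A * B * C)%type :=
  fun i j => X (i.1.2, i.2) (j.1.2, j.2) * (i.1.1 == j.1.1)%:R.
Definition embC {A B C : finType} (X : op C) : op (A * B * C)%type :=
  fun i j => X i.2 j.2 * (i.1 == j.1)%:R.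

Inductive otype := Tau | Omega | Theta.
Definition esign (t : otype) : int := if t is Omega then -1 else 1.

(* K_{-1}(X,Y,Z) = X^{-e_X/2} Y^{-e_Y/2} Z^{-e_Z} Y^{-e_Y/2} X^{-e_X/2};
   exponents of oppow are in halves *)
Definition Kminus1 {I : finType} (X Y Z : (op I * otype)%type) : op I :=
  let PX := oppow (- esign X.2) X.1 in
  let PY := oppow (- esign Y.2) Y.1 in
  let PZ := oppow (- (2 * esign Z.2)) Z.1 in
  opmul (opmul (opmul (opmul PX PY) PZ) PY) PX.

Definition vnorm2 {I : finType} (v : vec I) : F := \sum_i `|v i| ^+ 2.
(* ||Q||_oo <= c  (operator norm), for c >= 0 *)
Definition opnorm_le {I : finType} (Q : op I) (c : F) : Prop :=
  forall v : vec I, vnorm2 (opapp Q v) <= c ^+ 2 * vnorm2 v.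

(* exp(Delta_max(rho;X,Y,Z)) <= c, i.e. ||rho^{1/2} K_{-1} rho^{1/2}||_oo <= c *)
Definition expDmax_le {I : finType} (rho : op I) (X Y Z : (op I * otype)%type) (c : F)
  : Prop :=
  opnorm_le (opmul (opmul (oppow 1 rho) (Kminus1 X Y Z)) (oppow 1 rho)) c.

(* Delta_max(rho;X,Y,Z) >= Delta_max(rho';X',Y',Z'): since log is increasing,
   this says every upper bound c >= 0 of ||rho^{1/2}K rho^{1/2}||_oo is one of
   ||rho'^{1/2}K' rho'^{1/2}||_oo. *)
Definition Dmax_geq {I J : finType} (rho : op I) (X Y Z : (op I * otype)%type)
  (rho' : op J) (X' Y' Z' : (op J * otype)%type) : Prop :=
  forall c : F, 0 <= c -> expDmax_le rho X Y Z c -> expDmax_le rho' X' Y' Z' c.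

End QOps.

(* Main.v *)
Require Import Defs.
From HB Require Import structures.
From mathcomp Require Import all_boot all_order all_algebra.
From mathcomp Require Import ring.
From mathcomp Require spectral sesquilinear.
From Stdlib Require Import FunctionalExtensionality ClassicalEpsilon Classical.
Set Implicit Arguments. Unset Strict Implicit. Unset Printing Implicit Defensive.
Import Order.TTheory GRing.Theory Num.Theory.
Local Open Scope ring_scope.

Ltac ext2 := let i := fresh "i" in let j := fresh "j" in
  apply: functional_extensionality => i; apply: functional_extensionality => j.

Section PartA.
Variable F : numClosedFieldType.
Local Notation op := (op F).
Local Notation vec := (vec F).

Definition dot {I : finType} (u v : vec I) : F := \sum_i (u i)^* * v i.

Lemma opmulA {I : finType} (X Y Z : op I) :
  opmul (opmul X Y) Z = opmul X (opmul Y Z).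
Proof.
ext2; rewrite /opmul.
under eq_bigr do rewrite mulr_suml.
rewrite exchange_big; apply: eq_bigr => l _; rewrite mulr_sumr.
by apply: eq_bigr => k _; rewrite mulrA.
Qed.

Lemma sum_delta {I : finType} (a : I) (f : I -> F) :
  \sum_(d : I) (a == d)%:R * f d = f a.
Proof.
rewrite (bigD1 a) //= eqxx mul1r big1 ?addr0 // => d /negbTE.
by rewrite eq_sym => ->; rewrite mul0r.
Qed.

Lemma sum_delta' {I : finType} (a : I) (f : I -> F) :
  \sum_(d : I) f d * (d == a)%:R = f a.
Proof.
rewrite -[RHS](sum_delta a); apply: eq_bigr => d _.
by rewrite mulrC eq_sym.
Qed.

Lemma opmul1l {I : finType} (X : op I) : opmul (op1 F) X = X.
Proof. by ext2; rewrite /opmul /op1 sum_delta. Qed.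

Lemma opmul1r {I : finType} (X : op I) : opmul X (op1 F) = X.
Proof. by ext2; rewrite /opmul /op1 sum_delta'. Qed.

Lemma opadjK {I : finType} (X : op I) : opadj (opadj X) = X.
Proof. by ext2; rewrite /opadj conjCK. Qed.

Lemma opadj_mul {I : finType} (X Y : op I) :
  opadj (opmul X Y) = opmul (opadj Y) (opadj X).
Proof.
ext2; rewrite /opadj /opmul rmorph_sum; apply: eq_bigr => k _.
by rewrite rmorphM mulrC.
Qed.

Lemma opmul_diag {I : finType} (d e : vec I) :
  opmul (opdiag d) (opdiag e) = opdiag (fun i => d i * e i).
Proof.
ext2; rewrite /opmul /opdiag.
under eq_bigr do rewrite -mulrA.
rewrite sum_delta; case: eqP => [->|_]; by rewrite ?mul1r ?mul0r ?mulr0 // mulrC.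
Qed.

Lemma opadj_diag {I : finType} (d : vec I) :
  opadj (opdiag d) = opdiag (fun i => (d i)^*).
Proof.
ext2; rewrite /opadj /opdiag rmorphM rmorph_nat eq_sym.
by case: eqP => [->|]; rewrite ?mul1r ?mul0r.
Qed.

Lemma opapp_mul {I : finType} (X Y : op I) v :
  opapp (opmul X Y) v = opapp X (opapp Y v).
Proof.
apply: functional_extensionality => i; rewrite /opapp /opmul.
under eq_bigr do rewrite mulr_suml.
rewrite exchange_big; apply: eq_bigr => k _; rewrite mulr_sumr.
by apply: eq_bigr => l _; rewrite mulrA.
Qed.

Lemma opapp1 {I : finType} (v : vec I) : opapp (op1 F) v = v.
Proof. by apply: functional_extensionality => i; rewrite /opapp /op1 sum_delta. Qed.

Lemma dot_adj {I : finType} (X : op I) u v :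
  dot u (opapp X v) = dot (opapp (opadj X) u) v.
Proof.
rewrite /dot /opapp /opadj.
under eq_bigr do rewrite mulr_sumr.
under [RHS]eq_bigr do rewrite rmorph_sum mulr_suml.
rewrite exchange_big; apply: eq_bigr => j _; apply: eq_bigr => i _.
rewrite rmorphM /= conjCK mulrA; congr (_ * _); exact: mulrC.
Qed.

Lemma qformE {I : finType} (X : op I) v : qform X v = dot v (opapp X v).
Proof.
rewrite /qform /dot /opapp; apply: eq_bigr => i _; rewrite mulr_sumr.
by apply: eq_bigr => j _; rewrite mulrA.
Qed.

Lemma vnorm2E {I : finType} (v : vec I) : vnorm2 v = dot v v.
Proof. by rewrite /vnorm2 /dot; apply: eq_bigr => i _; rewrite normCKC. Qed.

Lemma dot_ge0 {I : finType} (v : vec I) : 0 <= dot v v.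
Proof. by rewrite -vnorm2E /vnorm2 sumr_ge0 // => i _; rewrite exprn_ge0. Qed.

Lemma dot_conj {I : finType} (u v : vec I) : (dot u v)^* = dot v u.
Proof.
rewrite /dot rmorph_sum; apply: eq_bigr => i _.
by rewrite rmorphM /= conjCK mulrC.
Qed.

Lemma dot0 {I : finType} (u : vec I) : dot u u = 0 -> u = (fun _ => 0).
Proof.
rewrite -vnorm2E /vnorm2 => H; apply: functional_extensionality => i.
have := psumr_eq0P (P := predT) (fun i _ => exprn_ge0 2 (normr_ge0 (u i))) H.
by move=> /(_ i isT) /eqP; rewrite expf_eq0 /= normr_eq0 => /eqP.
Qed.

Lemma dot0l {I : finType} (v : vec I) : dot (fun _ => 0) v = 0.
Proof. by rewrite /dot big1 // => i _; rewrite rmorph0 mul0r. Qed.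

Lemma vnorm2_app {I : finType} (X : op I) v :
  vnorm2 (opapp X v) = qform (opmul (opadj X) X) v.
Proof. by rewrite vnorm2E qformE opapp_mul [RHS]dot_adj opadjK. Qed.

End PartA.

Section PartB.
Variable F : numClosedFieldType.
Local Notation op := (op F).
Local Notation vec := (vec F).

Lemma CS {I : finType} (u v : vec I) :
  dot u v * dot v u <= dot u u * dot v v.
Proof.
set a := dot u u; set b := dot v v; set p := dot u v; set q := dot v u.
have a0 : 0 <= a := dot_ge0 u.
have [/eqP aE|anz] := boolP (a == 0).
  have u0 := dot0 aE.
  by rewrite /p /q /a /b u0 !dot0l !mul0r.
have apos : 0 < a by rewrite lt_def anz a0.
have ca : a^* = a := geC0_conj a0.
have cp : p^* = q by rewrite /p dot_conj.
pose w := fun i => a * v i - p * u i.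
have E : dot w w = a * (a * b - p * q).
  have -> : dot w w = \sum_i (a * a * ((v i)^* * v i) - a * p * ((v i)^* * u i)
       - a * q * ((u i)^* * v i) + p * q * ((u i)^* * u i)).
    apply: eq_bigr => i _; rewrite /w rmorphB !rmorphM /= ca cp.
    ring.
  rewrite big_split /= !sumrB -!mulr_sumr -/a -/b -/p -/q.
  rewrite -/(dot v v) -/(dot v u) -/(dot u v) -/(dot u u).
  rewrite -/a -/b -/p -/q.
  ring.
have := dot_ge0 w; rewrite E pmulr_rge0 // subr_ge0.
by [].
Qed.

Lemma real_conj (x : F) : 0 <= x -> x^* = x.
Proof. exact: geC0_conj. Qed.

Lemma vnorm2_ge0 {I : finType} (v : vec I) : 0 <= vnorm2 v.
Proof. by rewrite vnorm2E dot_ge0. Qed.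

Lemma L1 {I : finType} (T : op I) (c : F) : 0 <= c ->
  opnorm_le (opmul (opadj T) T) c ->
  forall v, vnorm2 (opapp T v) <= c * vnorm2 v.
Proof.
move=> c0 H v.
set Q := opmul (opadj T) T.
have xE : vnorm2 (opapp T v) = dot v (opapp Q v) by rewrite vnorm2_app qformE.
have x0 := vnorm2_ge0 (opapp T v).
have := CS v (opapp Q v).
rewrite -xE -(dot_conj v (opapp Q v)) -xE real_conj // -vnorm2E -vnorm2E.
move=> h1; have h2 := H v.
have h3 : vnorm2 (opapp T v) ^+ 2 <= (c * vnorm2 v) ^+ 2.
  rewrite expr2 (le_trans h1) //.
  rewrite exprMn [_ ^+ 2 * _]mulrC expr2 mulrA.
  rewrite -!mulrA ler_wpM2l ?vnorm2_ge0 // (le_trans h2) //.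
  by rewrite expr2 mulrC.
move: h3; rewrite (@ler_pXn2r _ 2%N) //; rewrite nnegrE //.
by rewrite mulr_ge0 ?vnorm2_ge0.
Qed.

Lemma L2 {I : finType} (T : op I) (c : F) : 0 <= c ->
  (forall v, vnorm2 (opapp T v) <= c * vnorm2 v) ->
  forall w, vnorm2 (opapp (opadj T) w) <= c * vnorm2 w.
Proof.
move=> c0 H w.
set y := vnorm2 (opapp (opadj T) w).
have y0 : 0 <= y := vnorm2_ge0 _.
have yE : y = dot w (opapp T (opapp (opadj T) w)).
  by rewrite /y vnorm2E [RHS]dot_adj.
have := CS w (opapp T (opapp (opadj T) w)).
rewrite -yE -(dot_conj w) -yE real_conj // -vnorm2E -vnorm2E -/y.
move=> h1.
have h2 : y * y <= vnorm2 w * c * y.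
  rewrite (le_trans h1) // -mulrA ler_wpM2l ?vnorm2_ge0 //.
have [/eqP ->|ynz] := boolP (y == 0).
  by rewrite mulr_ge0 ?vnorm2_ge0.
have ypos : 0 < y by rewrite lt_def ynz y0.
by rewrite -(ler_pM2r ypos) (le_trans h2) // [_ * c]mulrC.
Qed.

Lemma L3 {I : finType} (T : op I) (c : F) : 0 <= c ->
  (forall v, vnorm2 (opapp T v) <= c * vnorm2 v) ->
  (forall w, vnorm2 (opapp (opadj T) w) <= c * vnorm2 w) ->
  opnorm_le (opmul (opadj T) T) c.
Proof.
move=> c0 H1 H2 v; rewrite opapp_mul (le_trans (H2 _)) //.
by rewrite expr2 -mulrA ler_wpM2l.
Qed.

End PartB.

Section PartC.
Variable F : numClosedFieldType.
Local Notation op := (op F).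
Local Notation vec := (vec F).

Definition fc {I : finType} (k : int) (U : op I) (d : vec I) : op I :=
  opmul (opmul U (opdiag (fun i => hpow k (d i)))) (opadj U).

Lemma hpow_ge0 k (x : F) : 0 <= x -> 0 <= hpow k x.
Proof.
move=> x0; rewrite /hpow; case: eqP => // _.
by rewrite exprz_ge0 // sqrtC_ge0.
Qed.

Lemma hpow_mul a b (x : F) : hpow a x * hpow b x = hpow (a + b) x.
Proof.
rewrite /hpow; case: eqP => [_|/eqP xnz]; first by rewrite mul0r.
by rewrite expfzDr // sqrtC_eq0.
Qed.

Lemma hpow2 (x : F) : hpow 2 x = x.
Proof.
rewrite /hpow; case: eqP => [->//|_].
by rewrite -[X in _ ^ X]/(Posz 2%N) -exprnP sqrtCK.
Qed.

Lemma hpow0 (x : F) : hpow 0 x = (x != 0)%:R.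
Proof. by rewrite /hpow; case: eqP. Qed.

Lemma opmul_diag_r {I : finType} (W : op I) (d : vec I) :
  opmul W (opdiag d) = fun i j => W i j * d j.
Proof.
ext2; rewrite /opmul /opdiag.
under eq_bigr do rewrite mulrCA eq_sym.
by rewrite sum_delta.
Qed.

Lemma opmul_diag_l {I : finType} (W : op I) (d : vec I) :
  opmul (opdiag d) W = fun i j => d i * W i j.
Proof.
ext2; rewrite /opmul /opdiag.
under eq_bigr do rewrite -mulrA.
by rewrite sum_delta.
Qed.

Lemma fc_mul {I : finType} a b (U : op I) d : unitary U ->
  opmul (fc a U d) (fc b U d) = fc (a + b) U d.
Proof.
move=> [UU1 UU2]; rewrite /fc !opmulA.
rewrite -[opmul (opadj U) (opmul U _)]opmulA UU2 opmul1l.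
rewrite -[opmul (opdiag _) (opmul (opdiag _) _)]opmulA opmul_diag.
have -> : (fun i => hpow a (d i) * hpow b (d i)) = (fun i => hpow (a+b) (d i)).
  by apply: functional_extensionality => i; exact: hpow_mul.
by [].
Qed.

Lemma fc_adj {I : finType} k (U : op I) d : (forall i, 0 <= d i) ->
  opadj (fc k U d) = fc k U d.
Proof.
move=> d0; rewrite /fc !opadj_mul opadjK opadj_diag opmulA.
have -> : (fun i => (hpow k (d i))^* ) = (fun i => hpow k (d i)).
  by apply: functional_extensionality => i; rewrite real_conj ?hpow_ge0.
by [].
Qed.

Lemma fc2 {I : finType} (U : op I) d :
  fc 2 U d = opmul (opmul U (opdiag d)) (opadj U).
Proof.
rewrite /fc; have -> : (fun i => hpow 2 (d i)) = d.
  by apply: functional_extensionality => i; rewrite hpow2.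
by [].
Qed.

Lemma fc_unique {I : finType} k (X : op I) (U V : op I) (d e : vec I) :
  spec_decomp X (U, d) -> spec_decomp X (V, e) -> fc k U d = fc k V e.
Proof.
move=> [[UU1 UU2] [/= d0 /= XU]] [[VV1 VV2] [/= e0 /= XV]].
simpl in UU1, UU2, VV1, VV2.
set W := opmul (opadj V) U.
have key : opmul W (opdiag d) = opmul (opdiag e) W.
  have h1 : opmul (opmul (opadj V) X) U = opmul W (opdiag d).
    rewrite XU /W !opmulA UU2 opmul1r //.
  have h2 : opmul (opmul (opadj V) X) U = opmul (opdiag e) W.
    by rewrite XV /W !opmulA -[opmul (opadj V) (opmul V _)]opmulA VV2 opmul1l.
  by rewrite -h1 -h2.
have key2 : opmul W (opdiag (fun i => hpow k (d i))) =
            opmul (opdiag (fun i => hpow k (e i))) W.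
  move: key; rewrite !opmul_diag_r !opmul_diag_l => key; ext2.
  have := congr1 (fun f => f i j) key => /= h.
  have [->|] := eqVneq (d j) (e i); first by rewrite mulrC.
  move=> ne; have : W i j * (d j - e i) = 0 by rewrite mulrBr h [W i j * _]mulrC subrr.
  move/eqP; rewrite mulf_eq0 subr_eq0 (negbTE ne) orbF => /eqP ->.
  by rewrite mulr0 mul0r.
rewrite /fc -[LHS]opmul1l -VV1 !opmulA.
rewrite -[opmul (opadj V) (opmul U _)]opmulA -/W.
rewrite -[opmul W (opmul (opdiag _) _)]opmulA key2 !opmulA.
by rewrite UU1 opmul1r.
Qed.

Lemma oppowE {I : finType} k (X : op I) ud :
  spec_decomp X ud -> oppow k X = fc k ud.1 ud.2.
Proof.
move=> H; rewrite /oppow.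
set ud' := epsilon _ _.
have H' : spec_decomp X ud'.
  by apply: (epsilon_spec (inhabits (op1 F, fun _ => 0)) (spec_decomp X)); exists ud.
by case: ud H => U d H; case: ud' H' => U' d' H' /=; apply: fc_unique H' H.
Qed.

End PartC.

Section PartD.
Variable F : numClosedFieldType.
Local Notation op := (op F).
Local Notation vec := (vec F).

Definition op_of {I : finType} (M : 'M[F]_#|I|) : op I :=
  fun x y => M (enum_rank x) (enum_rank y).

Lemma sum_enum {I : finType} (G : 'I_#|I| -> F) :
  \sum_(k : 'I_#|I|) G k = \sum_(z : I) G (enum_rank z).
Proof.
by rewrite (reindex (@enum_rank I)) //; exact: onW_bij (enum_rank_bij I).
Qed.

Lemma op_of_mul {I : finType} (M N : 'M[F]_#|I|) :
  op_of (M *m N) = opmul (op_of M) (op_of N).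
Proof. by ext2; rewrite /op_of /opmul mxE sum_enum. Qed.

Lemma op_of_1 {I : finType} : op_of (1%:M : 'M[F]_#|I|) = op1 F.
Proof. by ext2; rewrite /op_of /op1 mxE (inj_eq enum_rank_inj). Qed.

Lemma op_of_diag {I : finType} (sp : 'rV[F]_#|I|) :
  op_of (diag_mx sp) = opdiag (fun x => sp 0 (enum_rank x)).
Proof.
ext2; rewrite /op_of /opdiag mxE (inj_eq enum_rank_inj).
by case: eqP => [->|_]; rewrite ?mulr1n ?mul1r ?mulr0n ?mul0r.
Qed.

Lemma eig_qform {I : finType} (X U : op I) (d : vec I) :
  unitary U -> X = opmul (opmul U (opdiag d)) (opadj U) ->
  forall x, d x = qform X (fun z => U z x).
Proof.
move=> [UU1 UU2] XE x.
have : opmul (opadj U) (opmul X U) = opdiag d.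
  by rewrite XE !opmulA UU2 opmul1r -opmulA UU2 opmul1l.
move/(congr1 (fun f => f x x)); rewrite /opdiag eqxx mul1r => <-.
rewrite /opmul /qform /opadj; apply: eq_bigr => z _; rewrite mulr_sumr.
by apply: eq_bigr => w _; rewrite mulrA.
Qed.

Lemma spec_exists {I : finType} (X : op I) : psd X -> exists ud, spec_decomp X ud.
Proof.
move=> [Xh Xpsd].
pose A : 'M[F]_#|I| := \matrix_(i, j) X (enum_val i) (enum_val j).
have AX : op_of A = X by ext2; rewrite /op_of mxE !enum_rankK.
have Ah : map_mx Num.conj (trmx A) = A.
  apply/matrixP => i j; rewrite !mxE.
  by have := congr1 (fun f => f (enum_val i) (enum_val j)) Xh.
have An : A \is spectral.normalmx by apply/spectral.normalmxP; rewrite Ah.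
have Pu := spectral.spectral_unitarymx A.
have AE := spectral.orthomx_spectralP An.
rewrite spectral.invmx_unitary // in AE.
set P := spectral.spectralmx A in AE Pu.
set sp := spectral.spectral_diag A in AE.
pose U : op I := op_of (map_mx Num.conj (trmx P)).
pose d : vec I := fun x => sp 0 (enum_rank x).
have PU : op_of P = opadj U.
  by ext2; rewrite /opadj /U /op_of !mxE conjCK.
have Uu : unitary U.
  split.
    rewrite -PU -op_of_mul -spectral.invmx_unitary // mulVmx ?op_of_1 //.
    exact: spectral.unitarymx_unit.
  by rewrite -PU -op_of_mul; move/spectral.unitarymxP: Pu => ->; rewrite op_of_1.
have XE : X = opmul (opmul U (opdiag d)) (opadj U).
  by rewrite -AX {1}AE !op_of_mul op_of_diag PU.
exists (U, d); split => //; split => //= x.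
by rewrite (eig_qform Uu XE).
Qed.

Lemma spec_psd {I : finType} (X : op I) ud : spec_decomp X ud -> psd X.
Proof.
case: ud => U d [Uu [/= d0 /= XE]]; split.
  by unfold Defs.hermitian; rewrite XE -fc2 fc_adj.
move=> v; rewrite qformE XE !opapp_mul dot_adj.
set w := opapp (opadj U) v.
rewrite /dot /opapp /opdiag; apply: sumr_ge0 => i _.
under eq_bigr do rewrite -mulrA.
rewrite sum_delta mulrA.
by rewrite [_ * d i]mulrC -mulrA mulr_ge0 // -normCKC exprn_ge0.
Qed.

End PartD.

Section PartE.
Variable F : numClosedFieldType.
Local Notation op := (op F).
Local Notation vec := (vec F).

Definition reindexop {I J : finType} (e : J -> I) (X : op I) : op J :=
  fun i j => X (e i) (e j).

Definition emb2 {K D : finType} (X : op K) : op (K * D)%type :=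
  fun i j => X i.1 j.1 * (i.2 == j.2)%:R.

Lemma sum_bij {I J : finType} (e : J -> I) (e' : I -> J) (G : I -> F) :
  cancel e e' -> cancel e' e -> \sum_(i : I) G i = \sum_(j : J) G (e j).
Proof.
move=> h1 h2; rewrite (reindex e) //.
by apply: onW_bij; exists e'.
Qed.

Section Reidx.
Variables (I J : finType) (e : J -> I) (e' : I -> J).
Hypotheses (h1 : cancel e e') (h2 : cancel e' e).

Lemma reindex_mul (X Y : op I) :
  opmul (reindexop e X) (reindexop e Y) = reindexop e (opmul X Y).
Proof. by ext2; rewrite /opmul /reindexop (sum_bij _ h1 h2). Qed.

Lemma reindex_adj (X : op I) : opadj (reindexop e X) = reindexop e (opadj X).
Proof. by []. Qed.

Lemma reindex_1 : reindexop e (op1 F) = op1 F.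
Proof. by ext2; rewrite /reindexop /op1 (inj_eq (can_inj h1)). Qed.

Lemma reindex_diag (d : vec I) :
  reindexop e (opdiag d) = opdiag (fun j => d (e j)).
Proof. by ext2; rewrite /reindexop /opdiag (inj_eq (can_inj h1)). Qed.

Lemma reindex_psd (X : op I) : psd X -> psd (reindexop e X).
Proof.
move=> [Xh Xp]; split; first by rewrite /Defs.hermitian reindex_adj Xh.
move=> v; have := Xp (fun i => v (e' i)); rewrite /qform.
rewrite (sum_bij _ h1 h2); under eq_bigr do rewrite (sum_bij _ h1 h2).
by rewrite /reindexop; under eq_bigr do under eq_bigr do rewrite !h1.
Qed.

Lemma reindex_K (X : op J) : reindexop e (reindexop e' X) = X.
Proof. by ext2; rewrite /reindexop !h1. Qed.

End Reidx.

Lemma emb2_mul {K D : finType} (X Y : op K) :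
  opmul (emb2 X : op (K * D)%type) (emb2 Y) = emb2 (opmul X Y).
Proof.
ext2; rewrite /opmul /emb2.
rewrite (eq_bigr (fun z => (X i.1 z.1 * Y z.1 j.1) * ((i.2 == z.2)%:R * (z.2 == j.2)%:R))); last first.
  by move=> z _; ring.
rewrite -(pair_bigA _ (fun k d => X i.1 k * Y k j.1 * ((i.2 == d)%:R * (d == j.2)%:R))) /=.
rewrite big_distrl /=; apply: eq_bigr => k _.
by rewrite -mulr_sumr sum_delta.
Qed.

Lemma emb2_adj {K D : finType} (X : op K) :
  opadj (emb2 X : op (K * D)%type) = emb2 (opadj X).
Proof. by ext2; rewrite /opadj /emb2 rmorphM /= rmorph_nat eq_sym. Qed.

Lemma emb2_1 {K D : finType} : (emb2 (op1 F) : op (K * D)%type) = op1 F.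
Proof. by ext2; case: i j => [? ?] [? ?]; rewrite /emb2 /op1 /= -natrM mulnb xpair_eqE. Qed.

Lemma emb2_diag {K D : finType} (d : vec K) :
  (emb2 (opdiag d) : op (K * D)%type) = opdiag (fun i => d i.1).
Proof.
ext2; case: i j => [? ?] [? ?].
by rewrite /emb2 /opdiag /= mulrAC -natrM mulnb -xpair_eqE.
Qed.

Lemma lift_props {K L : finType} (phi : op K -> op L) (pi : L -> K) :
  (forall X Y, opmul (phi X) (phi Y) = phi (opmul X Y)) ->
  (forall X, opadj (phi X) = phi (opadj X)) ->
  phi (op1 F) = op1 F ->
  (forall d, phi (opdiag d) = opdiag (fun l => d (pi l))) ->
  forall X U d, spec_decomp X (U, d) ->
    spec_decomp (phi X) (phi U, fun l => d (pi l)) /\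
    forall k, oppow k (phi X) = phi (oppow k X).
Proof.
move=> hm ha h1 hd X U d sd.
have sd' : spec_decomp (phi X) (phi U, fun l => d (pi l)).
  case: sd => [[/= U1 U2] [/= d0 /= XE]].
  split; first by split; rewrite /= ha hm ?U1 ?U2 h1.
  split; first by move=> l /=.
  by rewrite /= XE -hd ha !hm.
split => // k; rewrite (oppowE k sd') (oppowE k sd) /= /fc.
by rewrite -(hd (fun i => hpow k (d i))) ha !hm.
Qed.

Lemma emb_hyps {I K D : finType} (e : I -> (K * D)%type) e' :
  cancel e e' -> cancel e' e ->
  let phi := fun X : op K => reindexop e (emb2 X : op (K * D)%type) in
  [/\ (forall X Y, opmul (phi X) (phi Y) = phi (opmul X Y)),
      (forall X, opadj (phi X) = phi (opadj X)),
      phi (op1 F) = op1 F &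
      (forall d, phi (opdiag d) = opdiag (fun l => d (e l).1))].
Proof.
move=> h1 h2 phi; split.
- by move=> X Y; rewrite /phi (reindex_mul h1 h2) emb2_mul.
- by move=> X; rewrite /phi reindex_adj emb2_adj.
- by rewrite /phi emb2_1 (reindex_1 h1).
- by move=> d; rewrite /phi emb2_diag (reindex_diag h1).
Qed.

End PartE.

Section PartF.
Variable F : numClosedFieldType.
Local Notation op := (op F).
Local Notation vec := (vec F).

Definition chanG {K D D' : finType} (M : op D -> op D') (X : op (K * D)%type)
  : op (K * D')%type :=
  fun i j => M (fun d d' => X (i.1, d) (j.1, d')) i.2 j.2.

Section Lin.
Variables (D D' : finType) (M : op D -> op D').
Hypothesis Ml : linear_map M.

Lemma lin0 : M (fun _ _ => 0) = fun _ _ => 0.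
Proof.
have := Ml 1 (fun _ _ => 0) (fun _ _ => 0).
have -> : (fun i j : D => 1 * (fun _ _ : D => (0 : F)) i j + (fun _ _ => 0) i j)
  = fun _ _ => 0 by ext2; rewrite mulr0 addr0.
move=> h; ext2; have := congr1 (fun f => f i j) h => /=.
rewrite mul1r => e; apply: (addrI (M (fun _ _ => 0) i j)).
by rewrite addr0 -e.
Qed.

Lemma linZ c (X : op D) : M (fun a b => c * X a b) = fun x y => c * M X x y.
Proof.
have := Ml c X (fun _ _ => 0); rewrite lin0.
have -> : (fun i j : D => c * X i j + (fun _ _ => (0:F)) i j) = fun a b => c * X a b.
  by ext2; rewrite addr0.
by move=> ->; ext2; rewrite addr0.
Qed.

Lemma lin_sub c (X Y : op D) :
  M (fun a b => c * X a b - Y a b) = fun x y => c * M X x y - M Y x y.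
Proof.
have := Ml c X (fun a b => -1 * Y a b); rewrite linZ.
have -> : (fun i j : D => c * X i j + (fun a b => -1 * Y a b) i j) =
  fun a b => c * X a b - Y a b by ext2; rewrite mulN1r.
by move=> ->; ext2; rewrite mulN1r.
Qed.

Lemma lin_sum (T : Type) (r : seq T) (c : T -> F) (Y : T -> op D) :
  M (fun a b => \sum_(k <- r) c k * Y k a b) =
  fun x y => \sum_(k <- r) c k * M (Y k) x y.
Proof.
elim: r => [|k r IH].
  have -> : (fun a b : D => \sum_(k <- [::]) c k * Y k a b) = fun _ _ => 0.
    by ext2; rewrite big_nil.
  by rewrite lin0; ext2; rewrite big_nil.
have -> : (fun a b : D => \sum_(k0 <- k :: r) c k0 * Y k0 a b) =
  fun a b => c k * Y k a b + (fun a b => \sum_(k0 <- r) c k0 * Y k0 a b) a b.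
  by ext2; rewrite big_cons.
by rewrite Ml IH; ext2; rewrite big_cons.
Qed.

End Lin.

Lemma pair_delta {K D : finType} (a : D) (G : (K * D)%type -> F) :
  \sum_(z : K * D) G z * (a == z.2)%:R = \sum_k G (k, a).
Proof.
rewrite (eq_bigr (fun z => G (z.1, z.2) * (a == z.2)%:R)); last by case.
rewrite -(pair_bigA _ (fun k d => G (k, d) * (a == d)%:R)) /=.
apply: eq_bigr => k _.
rewrite (eq_bigr (fun d => (a == d)%:R * G (k, d))); first exact: sum_delta.
by move=> d _; rewrite mulrC.
Qed.

Lemma chanG_mull {K D D' : finType} (M : op D -> op D') (g : op K)
  (W : op (K * D)%type) : linear_map M ->
  chanG M (opmul (emb2 g) W) = opmul (emb2 g) (chanG M W).
Proof.
move=> Ml; ext2; rewrite /chanG /opmul /emb2 /=.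
have -> : (fun d d' => \sum_(z : K * D) g i.1 z.1 * ((i.1, d).2 == z.2)%:R
     * W z ((j.1, d').1, d')) =
  fun d d' => \sum_k g i.1 k * (fun d d' => W (k, d) (j.1, d')) d d'.
  apply: functional_extensionality => x; apply: functional_extensionality => y.
  rewrite -(pair_delta x (fun z => g i.1 z.1 * W z (j.1, y))).
  by apply: eq_bigr => z _ /=; rewrite mulrAC.
rewrite (lin_sum Ml (index_enum K) (fun k => g i.1 k) (fun k d d' => W (k, d) (j.1, d'))).
rewrite -(pair_delta i.2 (fun z => g i.1 z.1 * M (fun d d' => W (z.1, d) (j.1, d')) z.2 j.2)).
by apply: eq_bigr => z _ /=; rewrite mulrAC.
Qed.

Lemma chanG_mulr {K D D' : finType} (M : op D -> op D') (h : op K)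
  (W : op (K * D)%type) : linear_map M ->
  chanG M (opmul W (emb2 h)) = opmul (chanG M W) (emb2 h).
Proof.
move=> Ml; ext2; rewrite /chanG /opmul /emb2 /=.
have -> : (fun d d' => \sum_(z : K * D) W (i.1, d) z * (h z.1 j.1 * (z.2 == d')%:R)) =
  fun d d' => \sum_k h k j.1 * (fun d d' => W (i.1, d) (k, d')) d d'.
  apply: functional_extensionality => x; apply: functional_extensionality => y.
  rewrite -(pair_delta y (fun z => h z.1 j.1 * W (i.1, x) z)).
  by apply: eq_bigr => z _ /=; rewrite eq_sym; ring.
rewrite (lin_sum Ml (index_enum K) (fun k => h k j.1) (fun k d d' => W (i.1, d) (k, d'))).
rewrite -(pair_delta j.2 (fun z => h z.1 j.1 * M (fun d d' => W (i.1, d) (z.1, d')) i.2 z.2)).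
by apply: eq_bigr => z _ /=; rewrite eq_sym; ring.
Qed.

Lemma chanG_psd {K D D' : finType} (M : op D -> op D') (W : op (K * D)%type) :
  completely_positive M -> psd W -> psd (chanG M W).
Proof.
move=> Mcp Wp.
pose g : ('I_#|K| * D)%type -> (K * D)%type := fun p => (enum_val p.1, p.2).
pose g' : (K * D)%type -> ('I_#|K| * D)%type := fun q => (enum_rank q.1, q.2).
pose g2 : ('I_#|K| * D')%type -> (K * D')%type := fun p => (enum_val p.1, p.2).
pose g2' : (K * D')%type -> ('I_#|K| * D')%type := fun q => (enum_rank q.1, q.2).
have c1 : cancel g g' by case => a b; rewrite /g /g' /= enum_valK.
have c2 : cancel g' g by case => a b; rewrite /g /g' /= enum_rankK.
have c3 : cancel g2 g2' by case => a b; rewrite /g2 /g2' /= enum_valK.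
have c4 : cancel g2' g2 by case => a b; rewrite /g2 /g2' /= enum_rankK.
have := Mcp _ _ (reindex_psd c1 c2 Wp).
have -> : ampl M (reindexop g W) = reindexop g2 (chanG M W) by [].
move/(reindex_psd c4 c3); by rewrite (reindex_K c4).
Qed.

Definition eAC {A B C : finType} (i : (A * B * C)%type) : ((A * C) * B)%type :=
  ((i.1.1, i.2), i.1.2).
Definition fAC {A B C : finType} (p : ((A * C) * B)%type) : (A * B * C)%type :=
  (p.1.1, p.2, p.1.2).
Definition eBC {A B C : finType} (i : (A * B * C)%type) : ((B * C) * A)%type :=
  ((i.1.2, i.2), i.1.1).
Definition fBC {A B C : finType} (p : ((B * C) * A)%type) : (A * B * C)%type :=
  (p.2, p.1.1, p.1.2).
Definition eC {A B C : finType} (i : (A * B * C)%type) : (C * (A * B))%type :=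
  (i.2, i.1).
Definition fC {A B C : finType} (p : (C * (A * B))%type) : (A * B * C)%type :=
  (p.2, p.1).

Lemma cAC1 {A B C : finType} : cancel (@eAC A B C) fAC. Proof. by case=> [[]]. Qed.
Lemma cAC2 {A B C : finType} : cancel (@fAC A B C) eAC. Proof. by case=> [[]]. Qed.
Lemma cBC1 {A B C : finType} : cancel (@eBC A B C) fBC. Proof. by case=> [[]]. Qed.
Lemma cBC2 {A B C : finType} : cancel (@fBC A B C) eBC. Proof. by case=> [[]]. Qed.
Lemma cC1 {A B C : finType} : cancel (@eC A B C) fC. Proof. by case=> [[]]. Qed.
Lemma cC2 {A B C : finType} : cancel (@fC A B C) eC. Proof. by case=> ? []. Qed.

Lemma embAC_G {A B C : finType} (g : op (A * C)%type) :
  (embAC g : op (A * B * C)%type) = reindexop eAC (emb2 g).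
Proof. by []. Qed.
Lemma embBC_G {A B C : finType} (g : op (B * C)%type) :
  (embBC g : op (A * B * C)%type) = reindexop eBC (emb2 g).
Proof. by []. Qed.
Lemma embC_G {A B C : finType} (g : op C) :
  (embC g : op (A * B * C)%type) = reindexop eC (emb2 g).
Proof. by []. Qed.
Lemma chanB_G {A B B' C : finType} (M : op B -> op B') (X : op (A * B * C)%type) :
  chanB M X = reindexop eAC (chanG M (reindexop fAC X)).
Proof. by []. Qed.
Lemma chanA_G {A A' B C : finType} (M : op A -> op A') (X : op (A * B * C)%type) :
  chanA M X = reindexop eBC (chanG M (reindexop fBC X)).
Proof. by []. Qed.

Lemma reindex_mul_l {I J : finType} (e : I -> J) (f : J -> I)
  (h1 : cancel e f) (h2 : cancel f e) (G : op J) (W : op I) :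
  reindexop f (opmul (reindexop e G) W) = opmul G (reindexop f W).
Proof.
rewrite -{1}(reindex_K h1 W) (reindex_mul h1 h2).
by rewrite (reindex_K h2).
Qed.

Lemma reindex_mul_r {I J : finType} (e : I -> J) (f : J -> I)
  (h1 : cancel e f) (h2 : cancel f e) (G : op J) (W : op I) :
  reindexop f (opmul W (reindexop e G)) = opmul (reindexop f W) G.
Proof.
rewrite -{1}(reindex_K h1 W) (reindex_mul h1 h2).
by rewrite (reindex_K h2).
Qed.

End PartF.

Section PartG.
Variable F : numClosedFieldType.
Local Notation op := (op F).
Local Notation vec := (vec F).

Lemma pow_facts {I : finType} (X : op I) ud : spec_decomp X ud ->
  [/\ forall k, opadj (oppow k X) = oppow k X,
      forall a b, opmul (oppow a X) (oppow b X) = oppow (a + b) X,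
      oppow 2 X = X &
      forall w, qform (oppow 0 X) w <= vnorm2 w].
Proof.
case: ud => U d sd; have [Uu [/= d0 /= XE]] := sd.
split.
- by move=> k; rewrite (oppowE k sd) fc_adj.
- by move=> a b; rewrite !(oppowE _ sd) fc_mul //; case: Uu.
- by rewrite (oppowE 2 sd) /= fc2.
- move=> w; rewrite (oppowE 0 sd) /= /fc qformE !opapp_mul dot_adj.
  set u := opapp (opadj U) w.
  have -> : vnorm2 w = dot u u.
    by rewrite vnorm2E /u -dot_adj -opapp_mul (proj1 Uu) opapp1.
  rewrite /dot /opapp /opdiag; apply: ler_sum => i _.
  under eq_bigr do rewrite -mulrA.
  rewrite sum_delta hpow0; case: (d i != 0); rewrite ?mul1r //.
  by rewrite mul0r mulr0 -normCKC exprn_ge0.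
Qed.

Lemma pow_pd {I : finType} (X : op I) U d : spec_decomp X (U, d) ->
  (forall i, 0 < d i) -> oppow 0 X = op1 F.
Proof.
move=> sd dpos; rewrite (oppowE 0 sd) /= /fc.
have -> : (fun i => hpow 0 (d i)) = fun _ => 1.
  by apply: functional_extensionality => i; rewrite hpow0 lt0r_neq0.
have -> : opdiag (fun _ : I => (1 : F)) = op1 F by ext2; rewrite /opdiag mulr1.
by rewrite opmul1r; case: sd => [[]].
Qed.

Lemma qform_sandwich {I : finType} (H W : op I) w : opadj H = H ->
  qform (opmul (opmul H W) H) w = qform W (opapp H w).
Proof. by move=> Hh; rewrite !qformE !opapp_mul dot_adj Hh. Qed.

Lemma qform_lin {I : finType} c (X Y : op I) u :
  qform (fun i j => c * X i j - Y i j) u = c * qform X u - qform Y u.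
Proof.
rewrite /qform mulr_sumr -sumrB; apply: eq_bigr => i _.
rewrite mulr_sumr -sumrB; apply: eq_bigr => j _; ring.
Qed.

Lemma core {I J : finType} (rho Z PX PY : op I) (rho' Z' PX' PY' : op J) (c : F) :
  0 <= c ->
  (exists ud, spec_decomp rho ud) ->
  (exists ud, spec_decomp Z ud /\ forall i, 0 < ud.2 i) ->
  (exists ud, spec_decomp rho' ud) ->
  (exists ud, spec_decomp Z' ud) ->
  opadj PX = PX -> opadj PY = PY -> opadj PX' = PX' -> opadj PY' = PY' ->
  (psd (fun i j => c * Z i j - opmul (opmul (opmul PY PX) rho) (opmul PX PY) i j) ->
   psd (fun i j => c * Z' i j - opmul (opmul (opmul PY' PX') rho') (opmul PX' PY') i j)) ->
  opnorm_le (opmul (opmul (oppow 1 rho)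
     (opmul (opmul (opmul (opmul PX PY) (oppow (-2) Z)) PY) PX)) (oppow 1 rho)) c ->
  opnorm_le (opmul (opmul (oppow 1 rho')
     (opmul (opmul (opmul (opmul PX' PY') (oppow (-2) Z')) PY') PX')) (oppow 1 rho')) c.
Proof.
move=> c0 [udr sr] [[Uz dz] [sz dzpos]] [udr' sr'] [udz' sz'] hX hY hX' hY' Htr Hyp.
have [Rh RR _ _] := pow_facts sr.
have [Zh ZZ Z2 _] := pow_facts sz.
have [Rh' RR' _ _] := pow_facts sr'.
have [Zh' ZZ' Z2' Z0'] := pow_facts sz'.
have Z0 := pow_pd sz dzpos.
set R := oppow 1 rho in Hyp *.
set R' := oppow 1 rho' in Hyp *.
set S := oppow (-1) Z.
set S' := oppow (-1) Z'.
set Zs := oppow 1 Z.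
have rhoE : opmul R R = rho by rewrite /R RR; have [_ _ -> _] := pow_facts sr.
have rhoE' : opmul R' R' = rho' by rewrite /R' RR'; have [_ _ -> _] := pow_facts sr'.
have SS : opmul S S = oppow (-2) Z by rewrite /S ZZ.
have SS' : opmul S' S' = oppow (-2) Z' by rewrite /S' ZZ'.
have SZs : opmul S Zs = op1 F by rewrite /S /Zs ZZ.
have ZsZs : opmul Zs Zs = Z by rewrite /Zs ZZ Z2.
have SZS' : opmul (opmul S' Z') S' = oppow 0 Z'.
  by rewrite /S' -[X in opmul (opmul _ X) _]Z2' !ZZ'.
have RhE : opadj R = R by exact: Rh.
have RhE' : opadj R' = R' by exact: Rh'.
have ShE : opadj S = S by exact: Zh.
have ShE' : opadj S' = S' by exact: Zh'.
have ZsE : opadj Zs = Zs by exact: Zh.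
rewrite -SS in Hyp; rewrite -SS'.
clearbody R R' S S' Zs.
pose T := opmul (opmul S (opmul PY PX)) R.
pose T' := opmul (opmul S' (opmul PY' PX')) R'.
have HT : opnorm_le (opmul (opadj T) T) c.
  move: Hyp; rewrite /T !opadj_mul RhE ShE hX hY !opmulA.
  by [].
have H1 := L1 c0 HT.
have H2 := L2 c0 H1.
set W := opmul (opmul (opmul PY PX) rho) (opmul PX PY).
have H4 : forall w, qform (opmul (opmul S W) S) w <= c * vnorm2 w.
  move=> w; have := H2 w; rewrite vnorm2_app opadjK.
  suff -> : opmul T (opadj T) = opmul (opmul S W) S by [].
  rewrite /T /W -rhoE !opadj_mul RhE ShE hX hY !opmulA.
  by [].
have Zhh : opadj Z = Z by rewrite -Z2; exact: Zh.
have rhoh : opadj rho = rho by rewrite -rhoE opadj_mul RhE.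
have Wh : opadj W = W by rewrite /W !opadj_mul hX hY rhoh !opmulA.
have H5 : psd (fun i j => c * Z i j - W i j).
  split.
    rewrite /Defs.hermitian; ext2; rewrite /opadj rmorphB rmorphM /= real_conj //.
    have := congr1 (fun f => f i j) Zhh; have := congr1 (fun f => f i j) Wh.
    by rewrite /opadj /= => -> ->.
  move=> u; rewrite qform_lin subr_ge0.
  have := H4 (opapp Zs u).
  rewrite qform_sandwich // -opapp_mul SZs opapp1 vnorm2_app ZsE ZsZs.
  by [].
have H6 := Htr H5.
set W' := opmul (opmul (opmul PY' PX') rho') (opmul PX' PY') in H6.
have H7 : forall w, qform (opmul (opmul S' W') S') w <= c * vnorm2 w.
  move=> w; rewrite qform_sandwich //.
  have := (proj2 H6) (opapp S' w); rewrite qform_lin subr_ge0 => h.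
  rewrite (le_trans h) // -qform_sandwich // SZS' ler_wpM2l //.
have H8 : forall w, vnorm2 (opapp (opadj T') w) <= c * vnorm2 w.
  move=> w; rewrite vnorm2_app opadjK.
  suff -> : opmul T' (opadj T') = opmul (opmul S' W') S' by [].
  rewrite /T' /W' -rhoE' !opadj_mul RhE' ShE' hX' hY' !opmulA.
  by [].
have H9 := L2 c0 H8; rewrite opadjK in H9.
have := L3 c0 H9 H8.
rewrite /T' !opadj_mul RhE' ShE' hX' hY' !opmulA.
by [].
Qed.

End PartG.

Section PartH.
Variable F : numClosedFieldType.
Local Notation op := (op F).
Local Notation vec := (vec F).

Lemma pd_psd {I : finType} (X : op I) : pd X -> psd X.
Proof.
move=> [Xh Xp]; split => // v.
case: (classic (v = fun _ => 0)) => [->|vnz].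
  by rewrite /qform big1 // => i _; rewrite big1 // => j _; rewrite mulr0.
by apply: ltW; apply: Xp.
Qed.

Lemma pd_spec {I : finType} (X : op I) : pd X ->
  exists U d, spec_decomp X (U, d) /\ forall i, 0 < d i.
Proof.
move=> Xpd; have [[U d] sd] := spec_exists (pd_psd Xpd).
exists U, d; split => // i.
have [Uu [_ /= XE]] := sd.
rewrite (eig_qform Uu XE); apply: (proj2 Xpd) => /= col0.
have := congr1 (fun f => f i i) (proj2 Uu); rewrite /opmul /op1 eqxx /=.
rewrite big1 => [/eqP|k _]; first by rewrite eq_sym oner_eq0.
by have := congr1 (fun f => f k) col0 => /= ->; rewrite mulr0.
Qed.

Section ABC.
Variables (A B C : finType).

Lemma lift_AC (tau : op (A * C)%type) U d : spec_decomp tau (U, d) ->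
  spec_decomp (embAC tau : op (A * B * C)%type) (embAC U, fun l => d (eAC l).1) /\
  forall k, oppow k (embAC tau : op (A * B * C)%type) = embAC (oppow k tau).
Proof.
have [hm ha h1 hd] := @emb_hyps F _ _ _ _ _ (@cAC1 A B C) (@cAC2 A B C).
exact: lift_props hm ha h1 hd tau U d.
Qed.

Lemma lift_BC (th : op (B * C)%type) U d : spec_decomp th (U, d) ->
  spec_decomp (embBC th : op (A * B * C)%type) (embBC U, fun l => d (eBC l).1) /\
  forall k, oppow k (embBC th : op (A * B * C)%type) = embBC (oppow k th).
Proof.
have [hm ha h1 hd] := @emb_hyps F _ _ _ _ _ (@cBC1 A B C) (@cBC2 A B C).
exact: lift_props hm ha h1 hd th U d.
Qed.

Lemma lift_C (om : op C) U d : spec_decomp om (U, d) ->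
  spec_decomp (embC om : op (A * B * C)%type) (embC U, fun l => d (eC l).1) /\
  forall k, oppow k (embC om : op (A * B * C)%type) = embC (oppow k om).
Proof.
have [hm ha h1 hd] := @emb_hyps F _ _ _ _ _ (@cC1 A B C) (@cC2 A B C).
exact: lift_props hm ha h1 hd om U d.
Qed.

Lemma embAC_mul (a b : op (A * C)%type) :
  opmul (embAC a : op (A * B * C)%type) (embAC b) = embAC (opmul a b).
Proof.
by have [hm _ _ _] := @emb_hyps F _ _ _ _ _ (@cAC1 A B C) (@cAC2 A B C); exact: hm.
Qed.

Lemma embBC_mul (a b : op (B * C)%type) :
  opmul (embBC a : op (A * B * C)%type) (embBC b) = embBC (opmul a b).
Proof.
by have [hm _ _ _] := @emb_hyps F _ _ _ _ _ (@cBC1 A B C) (@cBC2 A B C); exact: hm.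
Qed.

Lemma embC_AC (om : op C) :
  (embC om : op (A * B * C)%type) = embAC (fun p q => om p.2 q.2 * (p.1 == q.1)%:R).
Proof.
ext2; case: i j => [[a b] c] [[a' b'] c'].
by rewrite /embC /embAC /= -mulrA -natrM mulnb -xpair_eqE.
Qed.

Lemma embC_BC (om : op C) :
  (embC om : op (A * B * C)%type) = embBC (fun p q => om p.2 q.2 * (p.1 == q.1)%:R).
Proof.
ext2; case: i j => [[a b] c] [[a' b'] c'].
by rewrite /embC /embBC /= -mulrA -natrM mulnb andbC -xpair_eqE.
Qed.

End ABC.

Section Chan.
Variables (A A' B B' C : finType).

Lemma chanB_mull (M : op B -> op B') (g : op (A * C)%type) (W : op (A * B * C)%type) :
  linear_map M -> chanB M (opmul (embAC g) W) = opmul (embAC g) (chanB M W).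
Proof.
move=> Ml; rewrite !chanB_G !embAC_G (reindex_mul_l cAC1 cAC2) (chanG_mull _ _ Ml).
by rewrite -(reindex_mul cAC1 cAC2).
Qed.

Lemma chanB_mulr (M : op B -> op B') (g : op (A * C)%type) (W : op (A * B * C)%type) :
  linear_map M -> chanB M (opmul W (embAC g)) = opmul (chanB M W) (embAC g).
Proof.
move=> Ml; rewrite !chanB_G !embAC_G (reindex_mul_r cAC1 cAC2) (chanG_mulr _ _ Ml).
by rewrite -(reindex_mul cAC1 cAC2).
Qed.

Lemma chanA_mull (M : op A -> op A') (g : op (B * C)%type) (W : op (A * B * C)%type) :
  linear_map M -> chanA M (opmul (embBC g) W) = opmul (embBC g) (chanA M W).
Proof.
move=> Ml; rewrite !chanA_G !embBC_G (reindex_mul_l cBC1 cBC2) (chanG_mull _ _ Ml).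
by rewrite -(reindex_mul cBC1 cBC2).
Qed.

Lemma chanA_mulr (M : op A -> op A') (g : op (B * C)%type) (W : op (A * B * C)%type) :
  linear_map M -> chanA M (opmul W (embBC g)) = opmul (chanA M W) (embBC g).
Proof.
move=> Ml; rewrite !chanA_G !embBC_G (reindex_mul_r cBC1 cBC2) (chanG_mulr _ _ Ml).
by rewrite -(reindex_mul cBC1 cBC2).
Qed.

Lemma chanB_lin (M : op B -> op B') c (X Y : op (A * B * C)%type) :
  linear_map M ->
  chanB M (fun i j => c * X i j - Y i j) = fun i j => c * chanB M X i j - chanB M Y i j.
Proof. by move=> Ml; ext2; rewrite /chanB (lin_sub Ml). Qed.

Lemma chanA_lin (M : op A -> op A') c (X Y : op (A * B * C)%type) :
  linear_map M ->
  chanA M (fun i j => c * X i j - Y i j) = fun i j => c * chanA M X i j - chanA M Y i j.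
Proof. by move=> Ml; ext2; rewrite /chanA (lin_sub Ml). Qed.

Lemma chanB_psd (M : op B -> op B') (X : op (A * B * C)%type) :
  completely_positive M -> psd X -> psd (chanB M X).
Proof.
move=> Mcp Xp; rewrite chanB_G.
apply: (reindex_psd cAC1 cAC2); apply: chanG_psd => //.
exact: (reindex_psd cAC2 cAC1).
Qed.

Lemma chanA_psd (M : op A -> op A') (X : op (A * B * C)%type) :
  completely_positive M -> psd X -> psd (chanA M X).
Proof.
move=> Mcp Xp; rewrite chanA_G.
apply: (reindex_psd cBC1 cBC2); apply: chanG_psd => //.
exact: (reindex_psd cBC2 cBC1).
Qed.

Lemma chanB_embBC (M : op B -> op B') (th : op (B * C)%type) :
  linear_map M -> chanB M (embBC th : op (A * B * C)%type) = embBC (chan1 M th).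
Proof.
move=> Ml; ext2; rewrite /chanB /embBC /chan1 /=.
have -> : (fun b b' => th (b, i.2) (b', j.2) * (i.1.1 == j.1.1)%:R) =
  fun b b' => (i.1.1 == j.1.1)%:R * th (b, i.2) (b', j.2).
  by apply: functional_extensionality => x; apply: functional_extensionality => y; rewrite mulrC.
by rewrite (linZ Ml) mulrC.
Qed.

Lemma chanA_embAC (M : op A -> op A') (ta : op (A * C)%type) :
  linear_map M -> chanA M (embAC ta : op (A * B * C)%type) = embAC (chan1 M ta).
Proof.
move=> Ml; ext2; rewrite /chanA /embAC /chan1 /=.
have -> : (fun b b' => ta (b, i.2) (b', j.2) * (i.1.2 == j.1.2)%:R) =
  fun b b' => (i.1.2 == j.1.2)%:R * ta (b, i.2) (b', j.2).
  by apply: functional_extensionality => x; apply: functional_extensionality => y; rewrite mulrC.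
by rewrite (linZ Ml) mulrC.
Qed.

End Chan.
End PartH.

Section PartH2.
Variable F : numClosedFieldType.
Local Notation op := (op F).

Lemma embAC_adj {A B C : finType} (g : op (A * C)%type) :
  opadj (embAC g : op (A * B * C)%type) = embAC (opadj g).
Proof.
by have [_ ha _ _] := @emb_hyps F _ _ _ _ _ (@cAC1 A B C) (@cAC2 A B C); exact: ha.
Qed.

Lemma embBC_adj {A B C : finType} (g : op (B * C)%type) :
  opadj (embBC g : op (A * B * C)%type) = embBC (opadj g).
Proof.
by have [_ ha _ _] := @emb_hyps F _ _ _ _ _ (@cBC1 A B C) (@cBC2 A B C); exact: ha.
Qed.

Lemma herm_lift {K L : finType} (om : op K) : opadj om = om ->
  opadj (fun (p q : (L * K)%type) => om p.2 q.2 * (p.1 == q.1)%:R) =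
  (fun p q => om p.2 q.2 * (p.1 == q.1)%:R).
Proof.
move=> h; ext2; rewrite /opadj rmorphM /= rmorph_nat eq_sym.
by have := congr1 (fun f => f i.2 j.2) h => /= <-.
Qed.

Lemma caseB {A B B' C : finType} (rho : op (A * B * C)%type) (th : op (B * C)%type)
  (M : op B -> op B') (gX gY : op (A * C)%type) c :
  pd_density rho -> pd_density th -> channel M ->
  opadj gX = gX -> opadj gY = gY -> 0 <= c ->
  opnorm_le (opmul (opmul (oppow 1 rho)
     (opmul (opmul (opmul (opmul (embAC gX) (embAC gY)) (oppow (-2) (embBC th)))
        (embAC gY)) (embAC gX))) (oppow 1 rho)) c ->
  opnorm_le (opmul (opmul (oppow 1 (chanB M rho))
     (opmul (opmul (opmul (opmul (embAC gX) (embAC gY))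
        (oppow (-2) (embBC (chan1 M th)))) (embAC gY)) (embAC gX)))
     (oppow 1 (chanB M rho))) c.
Proof.
move=> [rp _] [tp _] [Ml Mcp _] hX hY c0 Hc.
have [[Ur dr] sr] := spec_exists (pd_psd rp).
have [Ut [dt [st dtpos]]] := pd_spec tp.
have [sZ _] := lift_BC A st.
have Zpsd := spec_psd sZ.
apply: (core c0 _ _ _ _ _ _ _ _ _ Hc).
- by exists (Ur, dr).
- by exists (embBC Ut, fun l => dt (eBC l).1); split => // l; exact: dtpos.
- by apply: spec_exists; apply: chanB_psd => //; exact: pd_psd.
- by apply: spec_exists; rewrite -chanB_embBC //; exact: chanB_psd.
- by rewrite embAC_adj hX.
- by rewrite embAC_adj hY.
- by rewrite embAC_adj hX.
- by rewrite embAC_adj hY.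
move=> H; have := chanB_psd Mcp H.
rewrite chanB_lin // chanB_embBC // !embAC_mul chanB_mulr // chanB_mull //.
Qed.

Lemma caseA {A A' B C : finType} (rho : op (A * B * C)%type) (ta : op (A * C)%type)
  (N : op A -> op A') (gX gY : op (B * C)%type) c :
  pd_density rho -> pd_density ta -> channel N ->
  opadj gX = gX -> opadj gY = gY -> 0 <= c ->
  opnorm_le (opmul (opmul (oppow 1 rho)
     (opmul (opmul (opmul (opmul (embBC gX) (embBC gY)) (oppow (-2) (embAC ta)))
        (embBC gY)) (embBC gX))) (oppow 1 rho)) c ->
  opnorm_le (opmul (opmul (oppow 1 (chanA N rho))
     (opmul (opmul (opmul (opmul (embBC gX) (embBC gY))
        (oppow (-2) (embAC (chan1 N ta)))) (embBC gY)) (embBC gX)))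
     (oppow 1 (chanA N rho))) c.
Proof.
move=> [rp _] [tp _] [Ml Mcp _] hX hY c0 Hc.
have [[Ur dr] sr] := spec_exists (pd_psd rp).
have [Ut [dt [st dtpos]]] := pd_spec tp.
have [sZ _] := lift_AC B st.
have Zpsd := spec_psd sZ.
apply: (core c0 _ _ _ _ _ _ _ _ _ Hc).
- by exists (Ur, dr).
- by exists (embAC Ut, fun l => dt (eAC l).1); split => // l; exact: dtpos.
- by apply: spec_exists; apply: chanA_psd => //; exact: pd_psd.
- by apply: spec_exists; rewrite -chanA_embAC //; exact: chanA_psd.
- by rewrite embBC_adj hX.
- by rewrite embBC_adj hY.
- by rewrite embBC_adj hX.
- by rewrite embBC_adj hY.
move=> H; have := chanA_psd Mcp H.
rewrite chanA_lin // chanA_embAC // !embBC_mul chanA_mulr // chanA_mull //.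
Qed.

End PartH2.

Theorem mainTheorem15 (F : numClosedFieldType) (A B C A' B' : finType)
  (rho : op F (A * B * C)%type) (tau : op F (A * C)%type) (theta : op F (B * C)%type)
  (omega : op F C) (N : op F A -> op F A') (M : op F B -> op F B') :
  pd_density rho -> pd_density tau -> pd_density theta -> pd_density omega ->
  channel N -> channel M ->
  [/\ Dmax_geq rho (embAC tau, Tau) (embC omega, Omega) (embBC theta, Theta)
        (chanB M rho) (embAC tau, Tau) (embC omega, Omega)
        (embBC (chan1 M theta), Theta),
      Dmax_geq rho (embC omega, Omega) (embAC tau, Tau) (embBC theta, Theta)
        (chanB M rho) (embC omega, Omega) (embAC tau, Tau)
        (embBC (chan1 M theta), Theta),
      Dmax_geq rho (embC omega, Omega) (embBC theta, Theta) (embAC tau, Tau)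
        (chanA N rho) (embC omega, Omega) (embBC theta, Theta)
        (embAC (chan1 N tau), Tau)
    & Dmax_geq rho (embBC theta, Theta) (embC omega, Omega) (embAC tau, Tau)
        (chanA N rho) (embBC theta, Theta) (embC omega, Omega)
        (embAC (chan1 N tau), Tau)].
Proof.
move=> rp tp thp op Nch Mch.
have [Ut [dt [st _]]] := pd_spec (proj1 tp).
have [Uh [dh [sh _]]] := pd_spec (proj1 thp).
have [Uo [dO [so _]]] := pd_spec (proj1 op).
have E2 : (- (2 * 1) : int) = -2 by [].
have hT : forall k, opadj (oppow k tau) = oppow k tau.
  by have [h _ _ _] := pow_facts st.
have hH : forall k, opadj (oppow k theta) = oppow k theta.
  by have [h _ _ _] := pow_facts sh.
have hO : forall k, opadj (oppow k omega) = oppow k omega.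
  by have [h _ _ _] := pow_facts so.
have hOl : forall k (L : finType), opadj (fun (p q : (L * C)%type) =>
    oppow k omega p.2 q.2 * (p.1 == q.1)%:R) =
    (fun p q => oppow k omega p.2 q.2 * (p.1 == q.1)%:R).
  by move=> k L; apply: herm_lift.
split.
- move=> c c0 Hc; rewrite /expDmax_le /Kminus1 /= in Hc *.
  rewrite E2 in Hc *.
  rewrite !(proj2 (lift_AC B st)) !(proj2 (lift_C A B so)) embC_AC in Hc.
  rewrite !(proj2 (lift_AC B' st)) !(proj2 (lift_C A B' so)) embC_AC.
  exact: (caseB rp thp Mch (hT _) (hOl _ _) c0 Hc).
- move=> c c0 Hc; rewrite /expDmax_le /Kminus1 /= in Hc *.
  rewrite E2 in Hc *.
  rewrite !(proj2 (lift_AC B st)) !(proj2 (lift_C A B so)) embC_AC in Hc.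
  rewrite !(proj2 (lift_AC B' st)) !(proj2 (lift_C A B' so)) embC_AC.
  exact: (caseB rp thp Mch (hOl _ _) (hT _) c0 Hc).
- move=> c c0 Hc; rewrite /expDmax_le /Kminus1 /= in Hc *.
  rewrite E2 in Hc *.
  rewrite !(proj2 (lift_BC A sh)) !(proj2 (lift_C A B so)) embC_BC in Hc.
  rewrite !(proj2 (lift_BC A' sh)) !(proj2 (lift_C A' B so)) embC_BC.
  exact: (caseA rp tp Nch (hOl _ _) (hH _) c0 Hc).
- move=> c c0 Hc; rewrite /expDmax_le /Kminus1 /= in Hc *.
  rewrite E2 in Hc *.
  rewrite !(proj2 (lift_BC A sh)) !(proj2 (lift_C A B so)) embC_BC in Hc.
  rewrite !(proj2 (lift_BC A' sh)) !(proj2 (lift_C A' B so)) embC_BC.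
  exact: (caseA rp tp Nch (hH _) (hOl _ _) c0 Hc).
Qed.
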